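(* Let $n \ge 1$ and $t \ge 0$ be integers. If there is a $t$-resilient asynchronous message-passing protocol solving the colored cross-blockchain transaction task $(\mathcal{I}, \mathcal{O}, \Delta)$ on $n+1$ blockchains, then there is a $t$-resilient asynchronous message-passing protocol solving the colorless cross-blockchain transaction task $(\mathcal{I}, \mathcal{O}', \Xi)$ on $n+1$ blockchains. Both tasks are defined in the context.
   Context: Setting. There are $n+1$ distinct blockchains $C_0,\dots,C_n$. An $(n+1)$-party cross-blockchain transaction touches exactly one block $v_i$ on each blockchain $C_i$. Input complex $\mathcal{I}$. The vertices are the pairs $(v_i, a)$ with $0 \le i \le n$ and $a \in \{0,1,\bot\}$. Here $0$ means not committed, $1$ means committed, and $\bot$ means the block's branch was suspended by a fork. A nonempty set of vertices is a simplex if and only if its vertices involve pairwise distinct blocks. Colored output complex $\mathcal{O}$. The vertices are the pairs $(v_i, b)$ with $b \in \{0,1\}$, where $1$ means committed and $0$ means aborted. A nonempty set of vertices is a simplex if and only if its vertices involve pairwise distinct blocks and all carry the same value $b$. Hence $\mathcal{O}$ has two connected components. Colored carrier map $\Delta$. For a simplex $\sigma$ of $\mathcal{I}$ with block set $B(\sigma)$: - $\Delta(\sigma)$ is the simplex $\{(v,1) : v \in B(\sigma)\}$ together with its faces, if all input values in $\sigma$ are $1$; - it is $\{(v,0) : v \in B(\sigma)\}$ together with its faces, if some input value in $\sigma$ is $\bot$; - otherwise it is the subcomplex of $\mathcal{O}$ consisting of all simplices whose blocks lie in $B(\sigma)$, i.e. both the all-$0$ and the all-$1$ simplices on $B(\sigma)$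 and their faces. Colorless task. The colorless output complex $\mathcal{O}'$ has vertices $0$ and $1$ and only the simplices $\{0\}$ and $\{1\}$. The colorless carrier map is obtained from $\Delta$ by forgetting block identities: - $\Xi(\sigma)=\{1\}$ if all input values in $\sigma$ are $1$; - $\Xi(\sigma)=\{0\}$ if some input value in $\sigma$ is $\bot$; - $\Xi(\sigma)=\mathcal{O}'$ otherwise. Computational model. There are $n+1$ processes (process $i$ corresponds to blockchain $C_i$) communicating by asynchronous message passing, with at most $t$ crash failures. Process $i$ starts with an input vertex $(v_i,a_i)$ of $\mathcal{I}$. - A protocol solves the colored task if in every execution with at most $t$ crashes each non-crashed process $i$ eventually decides an output vertex $(v_i,b_i)$ of $\mathcal{O}$, and the set of decided vertices is a simplex of $\Delta(\sigma)$, where $\sigma$ is the simplex of inputs of the participating processes. - A protocol solves the colorless task if each non-crashed process eventually decides a value in $\{0,1\}$, and the set of decided values is a simplex of $\Xi(\sigma)$. *)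

(* Defs.v *)
From HB Require Import structures.
From Stdlib Require List.
From mathcomp Require Import all_boot.
Set Implicit Arguments.
Unset Strict Implicit.
Unset Printing Implicit Defensive.

(* Blockchain C_i carries block v_i; we identify block v_i with the    *)
(* index i : 'I_N (N = n+1).  Input values a : option bool with        *)
(*   None = ⊥ (suspended by fork), Some false = 0, Some true = 1.      *)

Section Complexes.
Variable N : nat.

Definition in_vertex := ('I_N * option bool)%type.
Definition out_vertex := ('I_N * bool)%type.

Definition distinct_blocks (T : finType) (s : {set 'I_N * T}) : bool :=
  [forall x in s, forall y in s, (x.1 == y.1) ==> (x == y)].

Definition blocks (T : finType) (s : {set 'I_N * T}) : {set 'I_N} :=
  [set x.1 | x in s].

Definition in_simplex (s : {set in_vertex}) : bool :=
  (s != set0) && distinct_blocks s.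

Definition out_simplex (s : {set out_vertex}) : bool :=
  [&& s != set0, distinct_blocks s & [forall x in s, forall y in s, x.2 == y.2]].

Definition out_complex : {set {set out_vertex}} := [set s | out_simplex s].

Definition faces (T : finType) (S : {set T}) : {set {set T}} :=
  [set s | (s != set0) && (s \subset S)].

Definition all_one (σ : {set in_vertex}) : bool := [forall x in σ, x.2 == Some true].
Definition some_bot (σ : {set in_vertex}) : bool := [exists x in σ, x.2 == None].

Definition Delta (σ : {set in_vertex}) : {set {set out_vertex}} :=
  if all_one σ then faces [set (v, true) | v in blocks σ]
  else if some_bot σ then faces [set (v, false) | v in blocks σ]
  else [set τ in out_complex | blocks τ \subset blocks σ].

(* colorless carrier map Ξ; O' has simplices {0} and {1} only *)
Definition Xi (σ : {set in_vertex}) : {set {set bool}} :=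
  if all_one σ then [set [set true]]
  else if some_bot σ then [set [set false]]
  else [set [set false]; [set true]].

End Complexes.

Record protocol (N : nat) (In Out : Type) := Protocol {
  pstate : Type;
  pmsg : Type;
  pinit : 'I_N -> In -> pstate;
  (* process, current state, received message (sender, payload) or none
     -> new state and list of messages to send (destination, payload) *)
  ptrans : 'I_N -> pstate -> option ('I_N * pmsg) -> pstate * seq ('I_N * pmsg);
  (* write-once decision: the first Some value is the decision *)
  pdecide : 'I_N -> pstate -> option Out }.

Section Model.
Variables (N : nat) (In Out : Type) (P : protocol N In Out).

Definition packet := ((nat * nat) * 'I_N * 'I_N * pmsg P)%type.
Definition pk_id (pk : packet) : nat * nat := pk.1.1.1.
Definition pk_src (pk : packet) : 'I_N := pk.1.1.2.
Definition pk_dst (pk : packet) : 'I_N := pk.1.2.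
Definition pk_msg (pk : packet) : pmsg P := pk.2.

Definition config := (('I_N -> pstate P) * seq packet)%type.

(* an event: no-op, or process p takes a step receiving nothing
   or receiving the in-transit packet with the given id *)
Definition event := option ('I_N * option (nat * nat)).

Definition upd (st : 'I_N -> pstate P) (p : 'I_N) (s : pstate P) : 'I_N -> pstate P :=
  fun q => if q == p then s else st q.

Definition tag (k : nat) (p : 'I_N) (out : seq ('I_N * pmsg P)) : seq packet :=
  [seq (((k, x.1), p, x.2.1, x.2.2) : packet) | x <- zip (iota 0 (size out)) out].

Definition step (k : nat) (c : config) (e : event) (c' : config) : Prop :=
  match e with
  | None => c' = c
  | Some (p, None) =>
      let r := @ptrans _ _ _ P p (c.1 p) None in
      c' = (upd c.1 p r.1, c.2 ++ tag k p r.2)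
  | Some (p, Some id) =>
      exists pk : packet, Stdlib.Lists.List.In pk c.2 /\ pk_id pk = id /\ pk_dst pk = p /\
        let r := @ptrans _ _ _ P p (c.1 p) (Some (pk_src pk, pk_msg pk)) in
        c' = (upd c.1 p r.1, [seq q <- c.2 | pk_id q != id] ++ tag k p r.2)
  end.

Definition steps_of (p : 'I_N) (e : event) : bool :=
  if e is Some (q, _) then q == p else false.

Definition execution (inp : 'I_N -> In) (c : nat -> config) (e : nat -> event) : Prop :=
  c 0 = ((fun p => @pinit _ _ _ P p (inp p)), [::]) /\
  forall k, step k (c k) (e k) (c k.+1).

(* F is the set of crashed processes: they take finitely many steps;
   all others take infinitely many steps, and every message sent to a
   non-crashed process is eventually delivered. *)
Definition admissible (c : nat -> config) (e : nat -> event) (F : {set 'I_N}) : Prop :=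
  [/\ forall p, p \in F -> exists K, forall k, K <= k -> ~~ steps_of p (e k),
      forall p, p \notin F -> forall K, exists k, K <= k /\ steps_of p (e k)
    & forall k pk, Stdlib.Lists.List.In pk (c k).2 -> pk_dst pk \notin F ->
        exists k', k <= k' /\ e k' = Some (pk_dst pk, Some (pk_id pk))].

Definition run (t : nat) (inp : 'I_N -> In) c e (F : {set 'I_N}) : Prop :=
  [/\ execution inp c e, admissible c e F & #|F| <= t].

Definition decides (c : nat -> config) (p : 'I_N) (o : Out) : Prop :=
  exists k, @pdecide _ _ _ P p ((c k).1 p) = Some o /\
            forall k', k' < k -> @pdecide _ _ _ P p ((c k').1 p) = None.

Definition participates (c : nat -> config) (e : nat -> event) (p : 'I_N) : Prop :=
  (exists k, steps_of p (e k)) \/ (exists o, decides c p o).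

End Model.

Definition solves_colored (N t : nat)
    (P : protocol N (in_vertex N) (out_vertex N)) : Prop :=
  forall (inp : 'I_N -> in_vertex N), (forall i, (inp i).1 = i) ->
  forall (c : nat -> config P) (e : nat -> event N) (F : {set 'I_N}),
  run t inp c e F ->
  [/\ forall p, p \notin F -> exists o, decides c p o,
      forall p o, decides c p o -> o.1 = p
    & forall (S : {set 'I_N}) (D : {set out_vertex N}),
        (forall p, p \in S <-> participates c e p) ->
        (forall x, x \in D <-> exists p, decides c p x) ->
        D = set0 \/ D \in Delta [set inp p | p in S]].

Definition solves_colorless (N t : nat)
    (P : protocol N (in_vertex N) bool) : Prop :=
  forall (inp : 'I_N -> in_vertex N), (forall i, (inp i).1 = i) ->
  forall (c : nat -> config P) (e : nat -> event N) (F : {set 'I_N}),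
  run t inp c e F ->
  (forall p, p \notin F -> exists o, decides c p o) /\
  (forall (S : {set 'I_N}) (D : {set bool}),
      (forall p, p \in S <-> participates c e p) ->
      (forall x, x \in D <-> exists p, decides c p x) ->
      D = set0 \/ D \in Xi [set inp p | p in S]).

(* Main.v *)
Require Import Defs.
From mathcomp Require Import all_boot.
From Stdlib Require Import ClassicalEpsilon.

Section Conv.
Variables (n : nat) (P : protocol n (in_vertex n) (out_vertex n)).

Definition P' : protocol n (in_vertex n) bool :=
  @Protocol n (in_vertex n) bool (pstate P) (pmsg P) (@pinit _ _ _ P) (@ptrans _ _ _ P)
    (fun p s => omap snd (@pdecide _ _ _ P p s)).

Lemma decides'E (c : nat -> config P') p b :
  @decides _ _ _ P' c p b <-> exists o, @decides _ _ _ P c p o /\ o.2 = b.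
Proof.
split.
- case=> k [Hk Hlt] /=.
  simpl in Hk.
  case E: (@pdecide _ _ _ P p ((c k).1 p)) Hk => [o|] //= [<-].
  exists o; split => //; exists k; split => // k' /Hlt /=.
  by case: (@pdecide _ _ _ P p ((c k').1 p)).
- case=> o [[k [Hk Hlt]] <-]; exists k; split => /=.
  + by rewrite Hk.
  + by move=> k' /Hlt /= ->.
Qed.

End Conv.

Theorem lemma3 (n t : nat) (hn : 1 <= n) :
  (exists P : protocol n.+1 (in_vertex n.+1) (out_vertex n.+1),
      solves_colored t P) ->
  exists P : protocol n.+1 (in_vertex n.+1) bool, solves_colorless t P.
Proof.
case=> P HP; exists (@P' _ P) => inp Hinp c e F Hrun.
have Hrun' : @run _ _ _ P t inp c e F by exact: Hrun.
have [Hterm Hval Hcol] := HP inp Hinp c e F Hrun'.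
split.
  move=> p /Hterm [o Ho]; exists o.2; apply/decides'E; by exists o.
move=> S D' HS HD'.
pose D := [set x : out_vertex n.+1 |
  if excluded_middle_informative (exists p, @decides _ _ _ P c p x) then true else false].
have HD : forall x, x \in D <-> exists p, @decides _ _ _ P c p x.
  move=> x; rewrite inE; case: excluded_middle_informative => //; split => //.
have HSP : forall p, p \in S <-> @participates _ _ _ P c e p.
  move=> p; rewrite HS /participates; split; case=> H; (try by left);
  right; case: H => o Ho.
  - by move: Ho => /decides'E [o' [Ho' _]]; exists o'.
  - by exists o.2; apply/decides'E; exists o.
have ED' : D' = [set x.2 | x in D].
  apply/setP => b; apply/idP/idP.
  - move/HD' => [p /decides'E [o [Ho <-]]]; apply/imsetP; exists o => //; apply/HD; by exists p.
  - move/imsetP => [o /HD [p Hp] ->]; apply/HD'; exists p; apply/decides'E; by exists o.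
case: (Hcol S D HSP HD) => [HD0 | HDin]; first by left; rewrite ED' HD0 imset0.
right.
have key : forall b, D != set0 -> (forall x, x \in D -> x.2 = b) -> D' = [set b].
  move=> b /set0Pn [x0 Hx0] Hb; apply/setP => b'; rewrite ED' inE.
  apply/imsetP/eqP => [[x Hx ->] | ->]; first exact: Hb.
  by exists x0 => //; rewrite Hb.
move: HDin; rewrite /Delta /Xi.
case: (all_one _).
  rewrite inE => /andP [Hne Hsub]; rewrite (key true Hne) ?inE //.
  move=> x /(subsetP Hsub) /imsetP [v _ ->] //.
case: (some_bot _).
  rewrite inE => /andP [Hne Hsub]; rewrite (key false Hne) ?inE //.
  move=> x /(subsetP Hsub) /imsetP [v _ ->] //.
rewrite !inE /out_simplex => /andP [/and3P [Hne _ /forallP Hall] _].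
case/set0Pn: (Hne) => x0 Hx0.
rewrite (key x0.2 Hne) ?inE.
  by case: (x0.2); rewrite eqxx ?orbT.
move=> x Hx; move: (Hall x); rewrite Hx /= => /forallP /(_ x0); rewrite Hx0 /=.
by move/eqP.
Qed.
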